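(* Let $E,F$ be Banach spaces over $\mathbb{K}$ and $m\in\mathbb{N}$. If the polynomial $P\in\mathcal{P}(^mE;F)$ has finite rank, then $\Delta^n_kP$ is of finite type for all $k,n\in\mathbb{N}$.
   Context: Banach spaces are over $\mathbb{K}=\mathbb{R}$ or $\mathbb{C}$. $\mathcal{P}(^jX;Y)$ is the space of continuous $j$-homogeneous polynomials $X\to Y$, $\mathcal{P}(^jX)=\mathcal{P}(^jX;\mathbb{K})$. For $P\in\mathcal{P}(^mE;F)$, $\Delta^n_kP\in\mathcal{P}(^n\mathcal{P}(^kF);\mathcal{P}(^{mnk}E))$ is defined by $\Delta^n_kP(q)(x)=q(P(x))^n$. A polynomial $Q\in\mathcal{P}(^jX;Y)$ has finite rank if the linear span of its range is finite dimensional; it is of finite type if it is a finite linear combination of polynomials of the form $x\mapsto\varphi(x)^jb$ with $\varphi\in X^*$, $b\in Y$. *)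

(* Defs.v *)
From HB Require Import structures.
From mathcomp Require Import all_boot all_order all_algebra.
From mathcomp Require Import all_classical all_reals all_analysis.
Import numFieldNormedType.Exports.
Import Order.TTheory GRing.Theory Num.Theory.

Set Implicit Arguments.
Unset Strict Implicit.
Unset Printing Implicit Defensive.

Local Open Scope ring_scope.

Definition upd (X : Type) (j : nat) (v : 'I_j -> X) (i : 'I_j) (z : X)
  : 'I_j -> X := fun l => if l == i then z else v l.

Definition multilinear (K : numFieldType) (X Y : lmodType K) (j : nat)
  (A : ('I_j -> X) -> Y) : Prop :=
  forall (i : 'I_j) (v : 'I_j -> X) (a : K) (x y : X),
    A (upd v i (a *: x + y)) = a *: A (upd v i x) + A (upd v i y).

Definition homogeneous_poly (K : numFieldType) (X Y : lmodType K) (j : nat)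
  (P : X -> Y) : Prop :=
  exists A : ('I_j -> X) -> Y, multilinear A /\ forall x, P x = A (fun _ => x).

Definition cont_hpoly (K : numFieldType) (X Y : normedModType K) (j : nat)
  (P : X -> Y) : Prop :=
  homogeneous_poly j P /\ continuous P.

(* Q has finite rank: the linear span of its range is finite dimensional,
   i.e. the range lies in the span of finitely many vectors b_0..b_{r-1}. *)
Definition finite_rank (K : numFieldType) (X Y : lmodType K) (Q : X -> Y) : Prop :=
  exists (r : nat) (b : 'I_r -> Y),
    forall x, exists c : 'I_r -> K, Q x = \sum_(i < r) c i *: b i.

Definition Pk (K : numFieldType) (F : normedModType K) (k : nat) (q : F -> K^o)
  : Prop := @cont_hpoly K F K^o k q.

(* phi is an element of the dual P(^k F)^*: a linear functional on the
   space P(^k F), continuous for its norm ||q|| = sup_{||y||<=1} |q y|,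
   i.e. there is C with |phi q| <= C ||q|| (written without sup:
   |phi q| <= C * M whenever M bounds |q| on the closed unit ball). *)
Definition Pk_dual (K : numFieldType) (F : normedModType K) (k : nat)
  (phi : (F -> K^o) -> K) : Prop :=
  (forall (a : K) (q1 q2 : F -> K^o), Pk k q1 -> Pk k q2 ->
      phi (fun y => a * q1 y + q2 y) = a * phi q1 + phi q2) /\
  exists C : K, 0 <= C /\
    forall (q : F -> K^o) (M : K), Pk k q -> 0 <= M ->
      (forall y : F, `|y| <= 1 -> `|q y| <= M) -> `|phi q| <= C * M.

Definition Delta (K : numFieldType) (E F : normedModType K) (n : nat)
  (P : E -> F) (q : F -> K^o) : E -> K^o := fun x => q (P x) ^+ n.

Definition Delta_finite_type (K : numFieldType) (E F : normedModType K)
  (m n k : nat) (P : E -> F) : Prop :=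
  exists (s : nat) (phi : 'I_s -> (F -> K^o) -> K) (b : 'I_s -> E -> K^o),
    (forall i, Pk_dual k (phi i)) /\
    (forall i, @cont_hpoly K E K^o (m * n * k) (b i)) /\
    forall q : F -> K^o, Pk k q ->
      Delta n P q = (fun x => \sum_(i < s) phi i q ^+ n * b i x).

(* Main.v *)
Require Import Defs.
From HB Require Import structures.
From mathcomp Require Import all_boot all_order all_algebra.
From mathcomp Require Import all_classical all_reals all_analysis.
From mathcomp Require Import zify.
Import numFieldNormedType.Exports.
Import Order.TTheory GRing.Theory Num.Theory.
Set Implicit Arguments.
Unset Strict Implicit.
Local Open Scope ring_scope.



Lemma ml_upd0 (K : numFieldType) (X Y : lmodType K) (j : nat)
  (A : ('I_j -> X) -> Y) : multilinear A ->
  forall i v, A (upd v i 0) = 0.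
Proof.
move=> H i v; have := H i v (-1) 0 0.
by rewrite scaler0 addr0 scaleN1r addNr.
Qed.

Lemma ml_scale (K : numFieldType) (X Y : lmodType K) (j : nat)
  (A : ('I_j -> X) -> Y) : multilinear A ->
  forall i v a x, A (upd v i (a *: x)) = a *: A (upd v i x).
Proof.
move=> H i v a x; have := H i v a x 0.
by rewrite addr0 (ml_upd0 H) addr0.
Qed.

Lemma ml_sum (K : numFieldType) (X Y : lmodType K) (j : nat)
  (A : ('I_j -> X) -> Y) : multilinear A ->
  forall i v (I : Type) (r : seq I) (c : I -> K) (b : I -> X),
  A (upd v i (\sum_(s <- r) c s *: b s)) = \sum_(s <- r) c s *: A (upd v i (b s)).
Proof.
move=> H i v I r c b; elim: r => [|s r IH]; first by rewrite !big_nil (ml_upd0 H).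
by rewrite !big_cons H IH.
Qed.

Lemma tuple_sum_split (V : nmodType) (t r : nat) (F : 'I_r -> t.-tuple 'I_r -> V) :
  \sum_(s : 'I_r) \sum_(b : t.-tuple 'I_r) F s b =
  \sum_(b : t.+1.-tuple 'I_r) F (thead b) [tuple of behead b].
Proof.
rewrite pair_big /=.
rewrite (reindex (fun b : t.+1.-tuple 'I_r => (thead b, [tuple of behead b]))) //=.
exists (fun p : 'I_r * t.-tuple 'I_r => [tuple of p.1 :: p.2]).
  by move=> b _; rewrite -tuple_eta.
by move=> [s b] _ /=; rewrite theadE; congr (_, _); apply: val_inj.
Qed.

Lemma ml_expand (K : numFieldType) (X Y : lmodType K) (k r : nat)
  (A : ('I_k -> X) -> Y) (T : Type) (p : T -> X) (c : T -> 'I_r -> K)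
  (b : 'I_r -> X) :
  multilinear A -> (forall x, p x = \sum_(s < r) c x s *: b s) ->
  forall t, (t <= k)%N -> forall w : 'I_k -> X, exists a : t.-tuple 'I_r -> Y,
  forall x, A (fun l => if (l < t)%N then p x else w l) =
    \sum_(be : t.-tuple 'I_r) (\prod_(s <- be) c x s) *: a be.
Proof.
move=> H Hp; elim=> [|t IH] Ht w.
  exists (fun _ => A w) => x.
  rewrite (eq_bigr (fun _ => A w)); last by move=> be _; rewrite tuple0 big_nil scale1r.
  by rewrite sumr_const card_tuple expn0.
have Htk : (t < k)%N by [].
pose i := Ordinal Htk.
have [a Ha] := choice (fun s : 'I_r => IH (ltnW Ht) (upd w i (b s))).
exists (fun be : t.+1.-tuple 'I_r => a (thead be) [tuple of behead be]) => x.
have -> : (fun l : 'I_k => if (l < t.+1)%N then p x else w l) =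
   upd (fun l : 'I_k => if (l < t)%N then p x else w l) i (p x).
  apply: funext => l; rewrite /upd; case: eqP => [->|/eqP]; first by rewrite /= ltnSn.
  rewrite ltnS leq_eqVlt -val_eqE /=; by case: (l == t :> nat).
rewrite [X in upd _ _ X]Hp (ml_sum H).
have E s : upd (fun l : 'I_k => if (l < t)%N then p x else w l) i (b s) =
   (fun l => if (l < t)%N then p x else upd w i (b s) l).
  apply: funext => l; rewrite /upd; case: eqP => [->|] //=; by rewrite ltnn.
under eq_bigr do rewrite E Ha scaler_sumr.
rewrite tuple_sum_split; apply: eq_bigr => be _.
rewrite scalerA; congr (_ *: _).
by rewrite [in RHS](tuple_eta be) /= big_cons.
Qed.



Lemma span_step (K : fieldType) (M : nat) (X : Type) (S : X -> Prop)
  (a : X -> 'rV[K]_M) N (xs : 'I_N -> X) :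
  (forall i, S (xs i)) ->
  ~ (forall x, S x -> (a x <= \matrix_i a (xs i))%MS) ->
  exists N' (xs' : 'I_N' -> X), (forall i, S (xs' i)) /\
    (\rank (\matrix_i a (xs i)) < \rank (\matrix_i a (xs' i)))%N.
Proof.
move=> HS Hn.
have [x [Sx Nx]] : exists x, S x /\ ~~ (a x <= \matrix_i a (xs i))%MS.
  apply: contrapT => Hc; apply: Hn => x Sx; apply/negPn/negP => Nx; apply: Hc; by exists x.
pose xs' (i : 'I_N.+1) := if unlift ord_max i is Some j then xs j else x.
exists N.+1, xs'; split.
  by move=> i; rewrite /xs'; case: unlift.
have Hsub : (\matrix_i a (xs i) <= \matrix_i a (xs' i))%MS.
  apply/row_subP => j; rewrite rowK.
  have -> : xs j = xs' (lift ord_max j) by rewrite /xs' liftK.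
  by apply/(submx_trans _ (row_sub (lift ord_max j) _)); rewrite rowK.
have Hx : (a x <= \matrix_i a (xs' i))%MS.
  have -> : x = xs' ord_max by rewrite /xs' unlift_none.
  by apply/(submx_trans _ (row_sub ord_max _)); rewrite rowK.
have [Hle E] := mxrank_leqif_sup Hsub.
rewrite ltn_neqAle Hle andbT E.
apply/negP => H; move: Nx; by rewrite (submx_trans Hx H).
Qed.

Lemma span_select (K : fieldType) (M : nat) (X : Type) (S : X -> Prop)
  (a : X -> 'rV[K]_M) :
  exists N (xs : 'I_N -> X), (forall i, S (xs i)) /\
    forall x, S x -> (a x <= \matrix_i a (xs i))%MS.
Proof.
suff main : forall d N (xs : 'I_N -> X), (forall i, S (xs i)) ->
   (M - \rank (\matrix_i a (xs i)) <= d)%N ->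
   exists N (xs : 'I_N -> X), (forall i, S (xs i)) /\
    forall x, S x -> (a x <= \matrix_i a (xs i))%MS.
  have xs0 : 'I_0 -> X by case.
  apply: (main M 0 xs0) => //.
    by move=> [].
  by rewrite leq_subr.
elim=> [|d IH] N xs HS Hd;
  (case: (pselect (forall x, S x -> (a x <= \matrix_i a (xs i))%MS)) => [Hall|Hn];
    [by exists N, xs|]);
  have [N' [xs' [HS' Hlt]]] := span_step HS Hn;
  have Hr := rank_leq_col (\matrix_i a (xs' i)).
  lia.
apply: (IH N' xs' HS'); lia.
Qed.



Lemma mxvec_index_inj (m n : nat) (i i' : 'I_m) (j j' : 'I_n) :
  mxvec_index i j = mxvec_index i' j' -> i = i' /\ j = j'.
Proof.
by rewrite /mxvec_index => /(congr1 val) /= /val_inj /enum_rank_inj [-> ->].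
Qed.

Lemma ml_comp (K : numFieldType) (X Y Z : lmodType K) (no d : nat)
  (Ao : ('I_no -> Y) -> Z) (Ai : 'I_no -> ('I_d -> X) -> Y) :
  multilinear Ao -> (forall i, multilinear (Ai i)) ->
  multilinear (fun w : 'I_(no * d) -> X =>
     Ao (fun i => Ai i (fun l => w (mxvec_index i l)))).
Proof.
move=> Ho Hi p v a x y; case: (mxvec_indexP p) => i0 l0.
have key z : (fun i => Ai i (fun l => upd v (mxvec_index i0 l0) z (mxvec_index i l))) =
   upd (fun i => Ai i (fun l => v (mxvec_index i l))) i0
       (Ai i0 (upd (fun l => v (mxvec_index i0 l)) l0 z)).
  apply: funext => i; rewrite /upd; case: eqP => [->|Hne].
    congr (Ai i0 _); apply: funext => l.
    case: eqP => [/mxvec_index_inj [_ ->]|]; first by rewrite eqxx.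
    by case: eqP => [->|].
  congr (Ai i _); apply: funext => l.
  by case: eqP => // /mxvec_index_inj [].
by rewrite !key Hi Ho.
Qed.

Lemma cont_sum (K : numFieldType) (T : topologicalType) (I : Type) (r : seq I)
  (f : I -> T -> K^o) :
  (forall i, continuous (f i)) -> continuous (fun x => \sum_(i <- r) f i x).
Proof.
move=> Hf; elim: r => [|s r IH].
  under [X in continuous X]funext do rewrite big_nil.
  exact: cst_continuous.
under [X in continuous X]funext do rewrite big_cons.
by move=> x; apply: (continuousD (Hf s x) (IH x)).
Qed.

Lemma cont_prod (K : numFieldType) (T : topologicalType) (I : Type) (r : seq I)
  (f : I -> T -> K^o) :
  (forall i, continuous (f i)) -> continuous (fun x => \prod_(i <- r) f i x).
Proof.
move=> Hf; elim: r => [|s r IH].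
  under [X in continuous X]funext do rewrite big_nil.
  exact: cst_continuous.
under [X in continuous X]funext do rewrite big_cons.
by move=> x; apply: (continuousM (Hf s x) (IH x)).
Qed.



Lemma chp_comp (K : numFieldType) (E F : normedModType K) (k m : nat)
  (q : F -> K^o) (P : E -> F) :
  cont_hpoly k q -> cont_hpoly m P -> cont_hpoly (k * m) (fun x => q (P x)).
Proof.
move=> [[Aq [Hq Eq]] cq] [[AP [HP EP]] cP]; split.
  exists (fun w : 'I_(k * m) -> E => Aq (fun i => AP (fun l => w (mxvec_index i l)))).
  split; first exact: (ml_comp Hq (fun _ => HP)).
  by move=> x; rewrite Eq EP.
by move=> x; apply: continuous_comp; [apply: cP|apply: cq].
Qed.

Lemma ml_prod (K : numFieldType) (n : nat) :
  multilinear (fun a : 'I_n -> K^o => \prod_i a i).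
Proof.
have E v i (z : K^o) : \prod_j upd v i z j = z * \prod_(j | j != i) v j.
  rewrite (bigD1 i) //= /upd eqxx; congr (_ * _).
  by apply: eq_bigr => j /negbTE ->.
move=> i v a x y; rewrite !E /=.
by rewrite mulrDl -scalerAl.
Qed.

Lemma chp_prod (K : numFieldType) (E : normedModType K) (n d : nat)
  (u : 'I_n -> E -> K^o) :
  (forall i, cont_hpoly d (u i)) -> cont_hpoly (n * d) (fun x => \prod_i u i x).
Proof.
move=> Hu.
have [Ai HA] := choice (fun i => (Hu i).1).
split.
  exists (fun w : 'I_(n * d) -> E =>
     (fun a : 'I_n -> K^o => \prod_i a i) (fun i => Ai i (fun l => w (mxvec_index i l)))).
  split.
  exact: (ml_comp (@ml_prod K n) (fun i => (HA i).1)).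
  move=> x /=; apply: eq_bigr => i _; by case: (HA i) => _ ->.
by apply: cont_prod => i; case: (Hu i).
Qed.

Lemma chp_lin (K : numFieldType) (E : normedModType K) (d N : nat)
  (c : 'I_N -> K) (u : 'I_N -> E -> K^o) :
  (forall i, cont_hpoly d (u i)) -> cont_hpoly d (fun x => \sum_i c i * u i x).
Proof.
move=> Hu.
have [Ai HA] := choice (fun i => (Hu i).1).
split.
  exists (fun w : 'I_d -> E => \sum_i c i * Ai i w).
  split.
    move=> p v a x y /=.
    rewrite scaler_sumr -big_split /=; apply: eq_bigr => i _.
    case: (HA i) => Hm _; rewrite Hm /=.
    by rewrite /GRing.scale /= mulrDr !mulrA [c i * a]mulrC.
  move=> x; apply: eq_bigr => i _; by case: (HA i) => _ ->.
apply: cont_sum => i x.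
apply: (@continuousM K E (fun _ => c i) (u i) x); first exact: cst_continuous.
by case: (Hu i) => _; apply.
Qed.



Lemma ml_homog (K : numFieldType) (X Y : lmodType K) (j : nat)
  (A : ('I_j -> X) -> Y) : multilinear A ->
  forall (t : K) w, A (fun l => t *: w l) = t ^+ j *: A w.
Proof.
move=> H t w.
suff S : forall s, (s <= j)%N ->
   A (fun l : 'I_j => if (l < s)%N then t *: w l else w l) = t ^+ s *: A w.
  rewrite -S //; congr A; apply: funext => l; by rewrite ltn_ord.
elim=> [|s IH] Hs.
  rewrite expr0 scale1r; congr A; apply: funext => l; by [].
pose i := Ordinal Hs.
have -> : (fun l : 'I_j => if (l < s.+1)%N then t *: w l else w l) =
   upd (fun l : 'I_j => if (l < s)%N then t *: w l else w l) i (t *: w i).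
  apply: funext => l; rewrite /upd; case: eqP => [->|/eqP]; first by rewrite /= ltnSn.
  rewrite ltnS leq_eqVlt -val_eqE /=; by case: (l == s :> nat).
rewrite (ml_scale H).
have -> : upd (fun l : 'I_j => if (l < s)%N then t *: w l else w l) i (w i) =
   (fun l : 'I_j => if (l < s)%N then t *: w l else w l).
  apply: funext => l; rewrite /upd; case: eqP => [->|] //=; by rewrite ltnn.
by rewrite IH ?(ltnW Hs) // scalerA exprS.
Qed.

Lemma eval_dual (K : numFieldType) (F : normedModType K) (k : nat) (y : F) :
  Pk_dual k (fun q : F -> K^o => q y).
Proof.
split; first by [].
case: (boolP (`|y| <= 1)) => Hy.
  exists 1; split; first exact: ler01.
  by move=> q M _ _ HM; rewrite mul1r; apply: HM.
have ny0 : 0 < `|y|.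
  rewrite normr_gt0; apply/negP => /eqP y0; move: Hy; by rewrite y0 normr0 ler01.
exists (`|y| ^+ k); split; first by apply: exprn_ge0; apply: ltW.
move=> q M [[A [HA EA]] _] M0 HM.
pose z := `|y|^-1 *: y.
have Hz : `|z| <= 1.
  rewrite normrZ ger0_norm ?invr_ge0 ?(ltW ny0) // mulVf ?lt0r_neq0 //.
have Ey : y = `|y| *: z by rewrite /z scalerA mulfV ?lt0r_neq0 // scale1r.
have -> : q y = `|y| ^+ k * q z.
  by rewrite [in LHS]Ey EA (ml_homog HA) -EA.
rewrite normrM normrX normr_id.
by apply: ler_wpM2l; [apply: exprn_ge0; apply: ltW|apply: HM].
Qed.



Lemma sum_enum (V : nmodType) (T : finType) (G : T -> V) :
  \sum_(t : T) G t = \sum_(i < #|T|) G (enum_val i).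
Proof.
rewrite (reindex (@enum_val T predT)) //.
by exists enum_rank => [i _|t _]; [rewrite enum_valK|rewrite enum_rankK].
Qed.

Theorem mainTheorem12 (K : numFieldType) (E F : completeNormedModType K)
  (m : nat) (P : E -> F) :
  cont_hpoly m P -> finite_rank P ->
  forall k n : nat, Delta_finite_type m n k P.
Proof.
move=> HP [r [bv Hb]] k n.
have [c Hc] := choice Hb.
pose M1 := #|{: k.-tuple 'I_r}|.
pose h (i : 'I_M1) (x : E) : K := \prod_(s <- (enum_val i : k.-tuple 'I_r)) c x s.
have Hexp : forall q : F -> K^o, Pk k q -> exists a : 'rV[K]_M1,
    forall x, q (P x) = \sum_(i < M1) a 0 i * h i x.
  move=> q [[Aq [HAq EAq]] _].
  have [a' Ha'] := ml_expand HAq Hc (leqnn k) (fun _ => 0).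
  exists (\row_i a' (enum_val i)) => x.
  rewrite EAq.
  have -> : (fun _ : 'I_k => P x) = (fun l : 'I_k => if (l < k)%N then P x else 0).
    by apply: funext => l; rewrite ltn_ord.
  rewrite Ha' sum_enum; apply: eq_bigr => i _.
  by rewrite mxE /GRing.scale /= mulrC.
have [aq Haq] : exists aq : (F -> K^o) -> 'rV[K]_M1, forall q, Pk k q ->
    forall x, q (P x) = \sum_(i < M1) aq q 0 i * h i x.
  have [aq Haq] := choice (fun q : F -> K^o =>
    (match pselect (Pk k q) with
     | left Hq => let: ex_intro a Ha := Hexp q Hq in ex_intro _ a (fun _ => Ha)
     | right Hq => ex_intro (fun a : 'rV[K]_M1 => Pk k q -> forall x, q (P x) = \sum_(i < M1) a 0 i * h i x) 0 (fun H => False_ind _ (Hq H))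
     end)).
  by exists aq.
have [N1 [qs [HSq Hin]]] := span_select (Pk k) aq.
pose B1 := \matrix_j aq (qs j).
pose l (q : F -> K^o) (j : 'I_N1) : K := (aq q *m pinvmx B1) 0 j.
pose u (j : 'I_N1) (x : E) : K^o := qs j (P x).
have Hu : forall j, cont_hpoly (k * m) (u j).
  by move=> j; apply: chp_comp => //; apply: HSq.
have Key1 : forall q, Pk k q -> forall x, q (P x) = \sum_j l q j * u j x.
  move=> q Hq x; rewrite Haq //.
  have E1 := mulmxKpV (Hin q Hq).
  have Ei i : aq q 0 i = \sum_j l q j * aq (qs j) 0 i.
    by rewrite -{1}E1 mxE; apply: eq_bigr => j _; rewrite [B1 j i]mxE.
  under eq_bigr do rewrite Ei mulr_suml.
  rewrite exchange_big /=; apply: eq_bigr => j _.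
  rewrite /u Haq ?HSq // mulr_sumr; apply: eq_bigr => i _; by rewrite mulrA.
pose M2 := #|{: {ffun 'I_n -> 'I_N1}}|.
pose U (i : 'I_M2) (x : E) : K^o := \prod_(t < n) u (enum_val i t) x.
pose Lf (q : F -> K^o) (i : 'I_M2) : K := \prod_(t < n) l q (enum_val i t).
have HU : forall i, cont_hpoly (n * (k * m)) (U i).
  by move=> i; apply: chp_prod => t; apply: Hu.
have Key2 : forall q, Pk k q -> forall x, q (P x) ^+ n = \sum_i Lf q i * U i x.
  move=> q Hq x; rewrite Key1 //.
  rewrite -[n in _ ^+ n]card_ord -prodr_const bigA_distr_bigA /= sum_enum.
  by apply: eq_bigr => i _; rewrite big_split.
pose Uvec (x : E) : 'rV[K]_M2 := \row_i U i x.
have [N2 [xs [_ Hin2]]] := span_select (fun _ : E => True) Uvec.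
pose B2 := \matrix_s Uvec (xs s).
pose mu (x : E) (s : 'I_N2) : K := (Uvec x *m pinvmx B2) 0 s.
have Key3 : forall q, Pk k q -> forall x,
    q (P x) ^+ n = \sum_s mu x s * q (P (xs s)) ^+ n.
  move=> q Hq x; rewrite Key2 //.
  have E2 := mulmxKpV (Hin2 x I).
  have Ei i : U i x = \sum_s mu x s * U i (xs s).
    have := congr1 (fun A : 'M[K]_(1, M2) => A 0 i) E2 => /=; rewrite [RHS]mxE => <-.
    rewrite mxE; apply: eq_bigr => s _.
    by congr (_ * _); rewrite !mxE.
  under eq_bigr do rewrite Ei mulr_sumr.
  rewrite exchange_big /=; apply: eq_bigr => s _.
  rewrite Key2 // mulr_sumr; apply: eq_bigr => i _; by rewrite mulrA [Lf q i * _]mulrC mulrA.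
exists N2, (fun s (q : F -> K^o) => q (P (xs s))), (fun s x => mu x s).
split; first by move=> s; apply: eval_dual.
split.
  move=> s.
  have -> : (fun x => mu x s) = (fun x => \sum_i pinvmx B2 i s * U i x).
    apply: funext => x; rewrite /mu mxE; apply: eq_bigr => i _.
    by rewrite mxE mulrC.
  have -> : (m * n * k = n * (k * m))%N by lia.
  exact: chp_lin.
move=> q Hq; apply: funext => x; rewrite /Delta Key3 //.
by apply: eq_bigr => s _; rewrite mulrC.
Qed.
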